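(* Let $D=\operatorname{diag}(d_1,\dots,d_n)$ with $d_i>0$, $Q=\operatorname{diag}(q_1,\dots,q_n)$ with $q_i>0$, $1\le p\le\infty$, and $L\in\mathbb{R}^{N\times N}$ symmetric with $L\mathbf{1}=0$. Then $\mu_{p,Q}(-L\otimes D)=\mu_p(-L\otimes D)$.
   Context: On $\mathbb{R}^{nN}$, with $u=(u_1^T,\dots,u_N^T)^T$, $u_i\in\mathbb{R}^n$, define $\|u\|_{p,Q}=\big\|(\|Qu_1\|_p,\dots,\|Qu_N\|_p)^T\big\|_p$. For a norm $\|\cdot\|$, the induced logarithmic norm is $\mu(A)=\lim_{h\to0^+}\frac1h(\|I+hA\|-1)$ with the induced operator norm; $\mu_{p,Q}$ and $\mu_p$ are those induced by $\|\cdot\|_{p,Q}$ and the standard $p$-norm on $\mathbb{R}^{nN}$. *)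

(* Defs.v *)
From HB Require Import structures.
From mathcomp Require Import all_boot all_order all_algebra.
From mathcomp Require Import all_classical all_reals all_analysis.
From mathcomp Require Import mxtens.
Set Implicit Arguments. Unset Strict Implicit. Unset Printing Implicit Defensive.
Import Order.TTheory GRing.Theory Num.Theory.
Import numFieldNormedType.Exports.
Local Open Scope ring_scope.
Local Open Scope classical_set_scope.

Section Defs.
Variable R : realType.

(* Standard p-norm on R^m, p in [1, +oo] represented as an extended real.
   (The -oo branch is never used: statements assume 1 <= p.) *)
Definition pnorm (p : \bar R) (m : nat) (v : 'I_m -> R) : R :=
  match p with
  | r%:E => (\sum_(i < m) `|v i| `^ r) `^ r^-1
  | _ => \big[Num.max/0]_(i < m) `|v i|
  end.

Definition vpnorm (p : \bar R) (m : nat) (u : 'cV[R]_m) : R :=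
  pnorm p (fun i => u i 0).

(* the i-th block u_i in R^n of u in R^(N n), u = (u_1^T,...,u_N^T)^T *)
Definition blk (N n : nat) (u : 'cV[R]_(N * n)) (i : 'I_N) : 'cV[R]_n :=
  \col_(j < n) u (mxtens_index (i, j)) 0.

Definition pQnorm (p : \bar R) (N n : nat) (Q : 'M[R]_n)
    (u : 'cV[R]_(N * n)) : R :=
  pnorm p (fun i : 'I_N => vpnorm p (Q *m blk u i)).

Definition opnorm (m : nat) (nrm : 'cV[R]_m -> R) (A : 'M[R]_m) : R :=
  sup [set nrm (A *m x) / nrm x | x in [set x : 'cV[R]_m | x != 0]].

Definition lognorm (m : nat) (nrm : 'cV[R]_m -> R) (A : 'M[R]_m) : R :=
  lim ((fun h : R => (opnorm nrm (1%:M + h *: A) - 1) / h) @ 0^'+).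

End Defs.

(* Main.v *)
Require Import Defs.
From HB Require Import structures.
From mathcomp Require Import all_boot all_order all_algebra.
From mathcomp Require Import all_classical all_reals all_analysis.
From mathcomp Require Import mxtens.
Import Order.TTheory GRing.Theory Num.Theory.
Import numFieldNormedType.Exports.
Local Open Scope ring_scope.

Set Implicit Arguments. Unset Strict Implicit.
Section Aux.
Variable R : realType.

Lemma pnorm_split (p : \bar R) (N n : nat) (f : 'I_(N*n) -> R) :
  (1 <= p)%E ->
  pnorm p f = pnorm p (fun i : 'I_N => pnorm p (fun j : 'I_n => f (@mxtens_index N n (i, j)))).
Proof.
case: p => [r| |] //= hr.
- rewrite lee_fin in hr.
  have r0 : r != 0 by rewrite gt_eqF // (lt_le_trans ltr01 hr).
  congr (_ `^ _).
  transitivity (\sum_(i < N) \sum_(j < n) `|f (@mxtens_index N n (i, j))| `^ r).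
    rewrite pair_big (reindex (@mxtens_index N n)) /=.
      by apply: eq_bigr => -[i j].
    by exists (@mxtens_unindex N n) => k _; rewrite (mxtens_indexK, mxtens_unindexK).
  apply: eq_bigr => i _.
  rewrite ger0_norm ?powR_ge0 // -powRrM mulVf // powRr1 //.
  by apply: sumr_ge0 => j _; apply: powR_ge0.
- have ge0 : forall (I : finType) (F : I -> R),
      0 <= \big[Num.max/0]_(i : I) `|F i|.
    move=> I F; apply: (big_ind (fun x : R => 0 <= x)) => //.
    by move=> x y hx hy; rewrite le_max hx.
  apply/le_anti/andP; split.
  + apply: bigmax_le => // k _.
    case: (mxtens_indexP k) => i j.
    apply: le_trans (le_bigmax _ _ i).
    rewrite [X in _ <= X]ger0_norm ?ge0 //.
    exact: (le_bigmax _ (fun j => `|f (@mxtens_index N n (i, j))|) j).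
  + apply: bigmax_le => // i _.
    rewrite [X in X <= _]ger0_norm ?ge0 //.
    apply: bigmax_le => // j _.
    exact: (le_bigmax _ (fun k => `|f k|) (@mxtens_index N n (i, j))).
Qed.

Definition wq N n (q : 'rV[R]_n) : 'rV[R]_(N*n) :=
  \row_k q 0 (@mxtens_unindex N n k).2.
Definition wqi N n (q : 'rV[R]_n) : 'rV[R]_(N*n) :=
  \row_k (q 0 (@mxtens_unindex N n k).2)^-1.

Lemma pQnorm_T p N n (q : 'rV[R]_n) (u : 'cV[R]_(N * n)) : (1 <= p)%E ->
  pQnorm p (diag_mx q) u = vpnorm p (diag_mx (wq N q) *m u).
Proof.
move=> hp; rewrite /vpnorm /pQnorm (pnorm_split _ hp); congr pnorm.
apply: funext => i; rewrite /vpnorm; congr pnorm; apply: funext => j.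
by rewrite !mul_diag_mx !mxE mxtens_indexK.
Qed.

Lemma T_comm N n (q d : 'rV[R]_n) (L : 'M[R]_N) :
  diag_mx (wq N q) *m (L *t diag_mx d) = (L *t diag_mx d) *m diag_mx (wq N q).
Proof.
apply/matrixP => k l; rewrite mul_diag_mx mul_mx_diag !mxE.
case: (mxtens_indexP k) => i j; case: (mxtens_indexP l) => i' j'.
rewrite !mxtens_indexK /=.
case: eqVneq => [->|_]; first by rewrite mulrC.
by rewrite mulr0n !mulr0 mul0r.
Qed.

Lemma T_inv N n (q : 'rV[R]_n) : (forall j, 0 < q 0 j) ->
  diag_mx (wq N q) *m diag_mx (wqi N q) = 1%:M /\
  diag_mx (wqi N q) *m diag_mx (wq N q) = 1%:M.
Proof.
move=> hq; split; apply/matrixP => k l; rewrite mul_diag_mx !mxE;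
  case: (eqVneq k l) => [->|_]; rewrite ?mulr0n ?mulr0 // mulr1n.
- by rewrite mulfV // gt_eqF.
- by rewrite mulVf // gt_eqF.
Qed.

Lemma opnorm_sim m (T Ti A : 'M[R]_m) (nrm nrm' : 'cV[R]_m -> R) :
  (forall u, nrm u = nrm' (T *m u)) -> Ti *m T = 1%:M -> T *m Ti = 1%:M ->
  T *m A = A *m T -> opnorm nrm A = opnorm nrm' A.
Proof.
move=> hn hTi hTi' hc; rewrite /opnorm; congr sup.
apply/seteqP; split => _ [x /= hx <-].
- exists (T *m x) => /=.
  + apply: contraNneq hx => h.
    by rewrite -(mul1mx x) -hTi -mulmxA h mulmx0.
  + by rewrite !hn !mulmxA hc.
- exists (Ti *m x) => /=.
  + apply: contraNneq hx => h.
    by rewrite -(mul1mx x) -hTi' -mulmxA h mulmx0.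
  + rewrite !hn !mulmxA hc hTi' mul1mx -(mulmxA A T Ti) hTi' mulmx1 //.
Qed.

End Aux.

Theorem lemma10 (R : realType) (n N : nat) (d q : 'rV[R]_n) (p : \bar R)
    (L : 'M[R]_N) :
  (forall j, 0 < d 0 j) -> (forall j, 0 < q 0 j) ->
  (1 <= p)%E ->
  L^T = L -> L *m (const_mx 1 : 'cV[R]_N) = 0 ->
  lognorm (@pQnorm R p N n (diag_mx q)) (- (L *t diag_mx d))
  = lognorm (@vpnorm R p (N * n)) (- (L *t diag_mx d)).
Proof.
move=> hd hq hp _ _.
have [h1 h2] := @T_inv R N n q hq.
have E : forall h : R,
    opnorm (@pQnorm R p N n (diag_mx q)) (1%:M + h *: - (L *t diag_mx d))
    = opnorm (@vpnorm R p (N * n)) (1%:M + h *: - (L *t diag_mx d)).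
  move=> h.
  apply: (opnorm_sim (T := diag_mx (wq N q)) (Ti := diag_mx (wqi N q))) => //.
  - by move=> u; apply: pQnorm_T.
  - by rewrite mulmxDr mulmxDl mulmx1 mul1mx -!scalemxAr -!scalemxAl mulmxN mulNmx T_comm.
rewrite /lognorm.
by under eq_fun => h do rewrite E.
Qed.
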